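(* (Euler's Homogeneous Theorem) Let $f$ be a function on the Cartesian $\mathbb Z_2^n$-manifold $\mathbb R^{p|\mathbf q}$ which is $\nabla^{p|\mathbf q}$-homogeneous of weight $1$, i.e. $\nabla^{p|\mathbf q}(f)=f$, where $\nabla^{p|\mathbf q}=\sum_a x^a\partial_{x^a}+\sum_\alpha\xi^\alpha\partial_{\xi^\alpha}$. Then there exist real numbers $F_a,G_\alpha\in\mathbb R$ such that $f=\sum_aF_ax^a+\sum_\alpha G_\alpha\xi^\alpha$.
   Context: Fix $n\ge 1$. The Cartesian $\mathbb Z_2^n$-manifold of dimension $p|\mathbf q$, $\mathbf q=(q_1,\dots,q_{2^n-1})$, is $\mathbb R^{p|\mathbf q}=(\mathbb R^p,C^\infty_{\mathbb R^p}[[\xi]])$, where $x^a$ are the standard linear coordinates on $\mathbb R^p$ (degree $0$) and $\xi^\alpha$ are formal coordinates, $q_i$ of them of the $i$-th non-zero degree in $\mathbb Z_2^n$, with $\xi^\alpha\xi^\beta=(-1)^{\langle\deg\xi^\alpha,\deg\xi^\beta\rangle}\xi^\beta\xi^\alpha$ ($\langle\cdot,\cdot\rangle$ the dot product mod 2; variables with odd self-pairing square to zero, the others generate formal power series). Functions on $\mathbb R^{p|\mathbf q}$ are global sections $f=\sum_{\boldsymbol\alpha}\xi^{\boldsymbol\alpha}f_{\boldsymbol\alpha}(x)$ (multi-index notation, $f_{\boldsymbol\alpha}$ smooth on $\mathbb R^p$). $\partial_{x^a}$ is the usual partial derivative acting on coefficients; $\partial_{\xi^\alpha}$ is the graded derivation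 with $\partial_{\xi^\alpha}\xi^\beta=\delta^\beta_\alpha$, extended by the graded Leibniz rule with signs $(-1)^{\langle\deg\xi^\alpha,\cdot\rangle}$. *)

(* Defs.v *)
From HB Require Import structures.
From mathcomp Require Import all_boot all_order all_algebra.
From mathcomp Require Import all_classical all_reals all_analysis.
Set Implicit Arguments. Unset Strict Implicit. Unset Printing Implicit Defensive.
Import Order.TTheory GRing.Theory Num.Theory.
Import numFieldNormedType.Exports.
Local Open Scope ring_scope.

Definition z2deg (n : nat) := {ffun 'I_n -> bool}.
Definition z2pair (n : nat) (u v : z2deg n) : nat :=
  odd (\sum_(i < n) ((u i && v i) : nat)).

(* N formal coordinates xi^0 ... xi^(N-1) with degrees deg : 'I_N -> z2deg n.
   A monomial xi^m = xi_0^(m 0) * ... * xi_(N-1)^(m (N-1)) (ordered product)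
   is given by an exponent vector m. *)
Definition expo (N : nat) := {ffun 'I_N -> nat}.
Definition expo0 (N : nat) : expo N := [ffun => 0%N].
Definition expo_unit (N : nat) (al : 'I_N) : expo N :=
  [ffun b => (b == al) : nat].
Definition expo_inc N (m : expo N) (al : 'I_N) : expo N :=
  [ffun b => if b == al then (m b).+1 else m b].
Definition expo_dec N (m : expo N) (al : 'I_N) : expo N :=
  [ffun b => if b == al then (m b).-1 else m b].

(* valid monomials: variables with odd self-pairing square to zero *)
Definition valid_expo n N (deg : 'I_N -> z2deg n) (m : expo N) : bool :=
  [forall al, (z2pair (deg al) (deg al) == 1%N) ==> (m al <= 1)%N].

(* parity of the Koszul sign obtained when moving xi^al (or d/dxi^al) from the
   left across the factors xi_b^(m b), b < al, of xi^m *)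
Definition ksign n N (deg : 'I_N -> z2deg n) (m : expo N) (al : 'I_N) : nat :=
  (\sum_(b < N | (b < al)%N) m b * z2pair (deg al) (deg b))%N.

Definition xcoord (R : realType) (p : nat) (a : 'I_p) (x : 'rV[R]_p) : R := x ord0 a.
Definition ebasis (R : realType) (p : nat) (a : 'I_p) : 'rV[R]_p := delta_mx ord0 a.
Definition dpartial (R : realType) (p : nat) (a : 'I_p) (g : 'rV[R]_p -> R)
  : 'rV[R]_p -> R := fun x => 'D_(ebasis R a) g x.
Fixpoint iter_partial (R : realType) (p : nat) (l : seq 'I_p) (g : 'rV[R]_p -> R)
  : 'rV[R]_p -> R :=
  match l with nil => g | a :: l' => dpartial a (iter_partial l' g) end.
Definition smooth (R : realType) (p : nat) (g : 'rV[R]_p -> R) : Prop :=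
  forall l : seq 'I_p, continuous (iter_partial l g) /\
    forall (a : 'I_p) (x : 'rV[R]_p), derivable (iter_partial l g) x (ebasis R a).

(* f = sum_m xi^m f_m(x), represented by its coefficient family m |-> f_m *)
Definition zfun (R : realType) (p N : nat) := expo N -> 'rV[R]_p -> R.

Definition is_zfun (R : realType) n p N (deg : 'I_N -> z2deg n) (f : zfun R p N)
  : Prop :=
  forall m, (valid_expo deg m -> smooth (f m)) /\ (~~ valid_expo deg m -> f m = fun _ => 0).

Definition x_dx (R : realType) p N (a : 'I_p) (f : zfun R p N) : zfun R p N :=
  fun m x => xcoord a x * dpartial a (f m) x.

(* d/dxi^al : graded derivation, d xi^b = delta, with Koszul signs *)
Definition dxi (R : realType) n p N (deg : 'I_N -> z2deg n) (al : 'I_N)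
  (f : zfun R p N) : zfun R p N :=
  fun m x => (-1) ^+ ksign deg m al * ((m al).+1)%:R * f (expo_inc m al) x.

Definition mul_xi (R : realType) n p N (deg : 'I_N -> z2deg n) (al : 'I_N)
  (f : zfun R p N) : zfun R p N :=
  fun m x => if (0 < m al)%N && valid_expo deg m
             then (-1) ^+ ksign deg m al * f (expo_dec m al) x else 0.

Definition euler (R : realType) n p N (deg : 'I_N -> z2deg n) (f : zfun R p N)
  : zfun R p N :=
  fun m x => \sum_(a < p) x_dx a f m x + \sum_(al < N) mul_xi deg al (dxi deg al f) m x.

Definition linear_zfun (R : realType) p N (F : 'I_p -> R) (G : 'I_N -> R)
  : zfun R p N :=
  fun m x => (if m == expo0 N then \sum_(a < p) F a * xcoord a x else 0)
             + \sum_(al < N) (if m == expo_unit al then G al else 0).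

(* Main.v *)
Require Import Defs.
From HB Require Import structures.
From mathcomp Require Import all_boot all_order all_algebra.
From mathcomp Require Import all_classical all_reals all_analysis.
From mathcomp Require Import ring lra zify.
Set Implicit Arguments. Unset Strict Implicit. Unset Printing Implicit Defensive.
Import Order.TTheory GRing.Theory Num.Theory.
Import numFieldNormedType.Exports.
Local Open Scope ring_scope.

Lemma mulk_derive (R : realType) (k x : R) : is_derive x (1:R) ( *%R k) k.
Proof.
have d : derivable (@id R) x 1 by exact: derivable_id.
split.
  by have := derivableM (derivable_cst k x 1) d.
have := deriveMl k d.
rewrite derive_id mulr1 => E; exact: E.
Qed.

Section S.
Variables (R : realType) (p : nat).
Local Notation V := 'rV[R]_p.

Lemma line_quot (g : V -> R) u y s :
  (fun h : R => h^-1 *: (((fun t : R => g (t *: u + y)) \o shift s) (h *: 1) - g (s *: u + y)))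
  = (fun h => h^-1 *: ((g \o shift (s *: u + y)) (h *: u) - g (s *: u + y))).
Proof.
apply/funext => h /=; congr (_ *: (g _ - _)).
by rewrite [h *: 1]mulr1 scalerDl addrA.
Qed.

Lemma line_derive (g : V -> R) u y s : derivable g (s *: u + y) u ->
  is_derive s (1:R) (fun t => g (t *: u + y)) ('D_u g (s *: u + y)).
Proof.
move=> d; split.
  by rewrite /derivable line_quot.
by rewrite /derive line_quot.
Qed.

Lemma scale_derive (g : V -> R) y v k : derivable g y v ->
  derivable g y (k *: v) /\ 'D_(k *: v) g y = k * 'D_v g y.
Proof.
move=> d.
pose psi := fun t : R => g (t *: v + y).
have hp : is_derive (0:R) (1:R) psi ('D_v g y).
  have d' : derivable g (0 *: v + y) v by rewrite scale0r add0r.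
  by have := line_derive d'; rewrite scale0r add0r.
have E : (fun h : R => h^-1 *: ((g \o shift y) (h *: (k *: v)) - g y)) =
   (fun h : R => h^-1 *: (((psi \o ( *%R k)) \o shift 0) (h *: 1) - (psi \o ( *%R k)) 0)).
  apply/funext => h /=; rewrite /psi mulr0 scale0r add0r addr0 [h *: 1]mulr1.
  by rewrite scalerA mulrC.
have dm : derivable ( *%R k) 0 1.
  by case: (mulk_derive k (0:R)).
have dc : derivable (psi \o ( *%R k)) 0 1.
  apply/derivable1_diffP; apply: differentiable_comp.
    by apply/derivable1_diffP.
  by apply/derivable1_diffP; rewrite mulr0; case: hp.
split; first by rewrite /derivable E.
have E' : (fun h : R => h^-1 *: ((g \o shift y) (h *: (k *: v)) - g y)) =
   (fun h : R => h^-1 *: ((psi \o ( *%R k)) (h + 0) - (psi \o ( *%R k)) 0)).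
  apply/funext => h /=; rewrite /psi mulr0 scale0r add0r addr0.
  by rewrite scalerA mulrC.
have -> : 'D_(k *: v) g y = derive1 (psi \o ( *%R k)) 0 by rewrite /derive E'.
have d2 : derivable psi (( *%R k) 0) 1 by rewrite mulr0; case: hp.
rewrite (derive1_comp dm d2).
rewrite mulr0 derive1E (@derive_val _ _ _ _ _ _ _ hp).
rewrite derive1E (@derive_val _ _ _ _ _ _ _ (mulk_derive k 0)) mulrC.
by [].
Qed.

Local Open Scope classical_set_scope.
Lemma mvt2 (f df : R -> R) a b : (forall x, is_derive x (1:R) f (df x)) ->
  exists c, `|c - a| <= `|b - a| /\ f b - f a = df c * (b - a).
Proof.
move=> H.
have cont : forall a b : R, {within `[a, b], continuous f}.
  move=> a' b'; apply: derivable_within_continuous => x _; by case: (H x).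
case: (leP a b) => hab.
  have [c cab E] := MVT_segment hab (fun x _ => H x) (cont a b).
  exists c; split => //.
  move: cab; rewrite in_itv /= => /andP[h1 h2].
  rewrite !ger0_norm ?subr_ge0 //; first by rewrite lerD2r.
have [c cab E] := MVT_segment (ltW hab) (fun x _ => H x) (cont b a).
exists c; split.
  move: cab; rewrite in_itv /= => /andP[h1 h2].
  rewrite !ler0_norm ?subr_le0 ?(ltW hab) //.
  by rewrite lerN2 lerD2r.
by rewrite -[LHS]opprB E -mulrN opprB.
Qed.

Lemma dir_sum (g : V -> R) (u w z : V) (Du : V -> R) :
  (forall y, is_derive y u g (Du y)) -> continuous Du -> derivable g z w ->
  is_derive z (u + w) g (Du z + 'D_w g z).
Proof.
move=> HD Dc dw.
suff H : (fun h : R => h^-1 *: ((g \o shift z) (h *: (u + w)) - g z)) @ 0^' --> (Du z + 'D_w g z).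
  split; first by apply/cvg_ex; eexists; exact: H.
  exact: cvg_lim H.
pose A := fun h : R => h^-1 *: (g (h *: u + (h *: w + z)) - g (h *: w + z)).
pose B := fun h : R => h^-1 *: ((g \o shift z) (h *: w) - g z).
have -> : (fun h : R => h^-1 *: ((g \o shift z) (h *: (u + w)) - g z)) = A + B.
  apply/funext => h; rewrite /A /B /= -[RHS]scalerDr; congr (_ *: _).
  by rewrite [in RHS]addrA subrK scalerDr addrA.
apply: cvgD; last exact: dw.
apply/cvgrPdist_lt => e e0.
have Hc : \forall t \near z, `|Du z - Du t| < e by move/cvgrPdist_lt: (Dc z); apply.
move/nbhs_normP: Hc => [d /= d0 Hd].
pose S := `|u| + `|w| + 1.
have S0 : 0 < S by rewrite /S ltr_pwDr // addr_ge0.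
near=> h.
have hn0 : h != 0 by near: h; exact: nbhs_dnbhs_neq.
have hs : `|h| < d / S.
  near: h; exists (d / S) => /=; first by rewrite divr_gt0.
  by move=> t; rewrite /ball /= sub0r normrN.
pose y := h *: w + z.
have Hl : forall t, is_derive t (1:R) (fun t => g (t *: u + y)) (Du (t *: u + y)).
  move=> t; case: (HD (t *: u + y)) => d1 d2.
  by rewrite -d2; apply: line_derive.
have [c [hc E]] := mvt2 0 h Hl.
move: E; rewrite scale0r add0r !subr0 => E.
have -> : A h = Du (c *: u + y).
  by rewrite /A -/y E [_ *: _]mulrC mulfK.
apply: Hd; rewrite /ball_ /= /y.

rewrite addrA opprD addrCA subrr addr0 normrN.
apply: (le_lt_trans (ler_normD _ _)); rewrite !normrZ.
have hS : `|h| * S < d by rewrite -ltr_pdivlMr.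
apply: le_lt_trans hS.
rewrite /S mulrDr mulr1 mulrDr.
have Hx : `|h| * `|u| + `|h| * `|w| <= `|h| * `|u| + `|h| * `|w| + `|h| by rewrite lerDl.
apply: le_trans Hx.
rewrite lerD2r; apply: ler_wpM2r => //; by move: hc; rewrite !subr0.
Unshelve. all: by end_near.
Qed.

Lemma coord_derive (g : V -> R) :
  (forall a y, derivable g y (ebasis R a)) -> (forall a, continuous (dpartial a g)) ->
  forall v z, is_derive z v g (\sum_(a < p) v ord0 a * dpartial a g z).
Proof.
move=> Hd Hc v.
suff H : forall s : seq 'I_p, forall z,
    is_derive z (\sum_(a <- s) v ord0 a *: ebasis R a) g (\sum_(a <- s) v ord0 a * dpartial a g z).
  move=> z; have := H (index_enum 'I_p) z.
  by rewrite -(row_sum_delta v).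
elim=> [|a s IH] z.
  by rewrite !big_nil; exact: is_derive0.
rewrite !big_cons.
pose Du := fun y => v ord0 a * dpartial a g y.
have HD : forall y, is_derive y (v ord0 a *: ebasis R a) g (Du y).
  move=> y; have [d1 d2] := scale_derive (v ord0 a) (Hd a y).
  by split.
have Dc : continuous Du.
  move=> y; rewrite /Du /continuous_at. have H1 := Hc a y. have H2 := cvgMl_tmp (a := v ord0 a) H1. exact: H2.
case: (IH z) => dw dv.
have := dir_sum HD Dc dw.
by rewrite dv.
Qed.

Lemma ray_derive (g : V -> R) :
  (forall a y, derivable g y (ebasis R a)) -> (forall a, continuous (dpartial a g)) ->
  forall x t, is_derive t (1:R) (fun t => g (t *: x))
     (\sum_(a < p) xcoord a x * dpartial a g (t *: x)).
Proof.
move=> Hd Hc x t.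
have C := coord_derive Hd Hc x (t *: x + 0).
case: C => dC vC.
have := line_derive dC.
rewrite vC addr0.
have -> : (fun t0 : R => g (t0 *: x + 0)) = (fun t => g (t *: x)).
  by apply/funext => t0; rewrite addr0.
by [].
Qed.

Definition Euler_eq (g : V -> R) (k : nat) :=
  forall y, \sum_(a < p) xcoord a y * dpartial a g y + k%:R * g y = g y.

Lemma ray_key (g : V -> R) (k : nat) : smooth g -> Euler_eq g k -> forall x,
  (forall t, is_derive t (1:R) (fun t => g (t *: x))
     (\sum_(a < p) xcoord a x * dpartial a g (t *: x))) /\
  (forall t, t * (\sum_(a < p) xcoord a x * dpartial a g (t *: x)) + k%:R * g (t *: x)
     = g (t *: x)).
Proof.
move=> sm eu x.
have Hd : forall a y, derivable g y (ebasis R a) := fun a y => (sm [::]).2 a y.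
have Hc : forall a, continuous (dpartial a g) := fun a => (sm [:: a]).1.
split; first exact: ray_derive Hd Hc x.
move=> t; rewrite -[RHS](eu (t *: x)) mulr_sumr; congr (_ + _).
by apply: eq_bigr => a _; rewrite /xcoord mxE mulrA.
Qed.

Lemma euler_k1 (g : V -> R) : smooth g -> Euler_eq g 1 -> forall x, g x = g 0.
Proof.
move=> sm eu x.
have [HR key] := ray_key sm eu x.
set D := fun t => \sum_(a < p) xcoord a x * dpartial a g (t *: x) in HR key.
have cont : {within `[0, 1], continuous (fun t => g (t *: x))}.
  apply: derivable_within_continuous => t _; by case: (HR t).
have [c c01 E] := MVT (@ltr01 R) (fun t _ => HR t) cont.
move: E; rewrite scale1r scale0r -/(D c).
have -> : D c = 0.
  have := key c; rewrite mul1r -/(D c) => /eqP; rewrite -subr_eq0 addrK mulf_eq0.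
  case/orP => [/eqP c0|/eqP //].
  by move: c01; rewrite c0 in_itv /= ltxx.
by rewrite mul0r => /eqP; rewrite subr_eq0 => /eqP.
Qed.

Lemma euler_k2 (g : V -> R) j : smooth g -> Euler_eq g j.+2 -> forall x, g x = 0.
Proof.
move=> sm eu x.
have [HR key] := ray_key sm eu x.
set D := fun t => \sum_(a < p) xcoord a x * dpartial a g (t *: x) in HR key.
pose psi := fun t : R => t ^+ j.+1 * g (t *: x).
pose dpsi := fun t : R => t ^+ j.+1 * D t + g (t *: x) * (j.+1%:R * t ^+ j).
have Hpsi : forall t, is_derive t (1:R) psi (dpsi t).
  move=> t.
  have hX : is_derive t (1:R) (fun t : R => t ^+ j.+1) (j.+1%:R * t ^+ j).
    split; first exact: exprn_derivable.
    by rewrite exp_derive [_ *: 1]mulr1.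
  exact: (is_deriveM hX (HR t)).
have dz : forall t, dpsi t = 0.
  move=> t; rewrite /dpsi exprSr -mulrA.
  have kt : t * D t = g (t *: x) - j.+2%:R * g (t *: x).
    by apply/eqP; rewrite eq_sym subr_eq eq_sym key.
  rewrite kt; ring.
have cont : {within `[0, 1], continuous psi}.
  apply: derivable_within_continuous => t _; by case: (Hpsi t).
have [c c01 E] := MVT (@ltr01 R) (fun t _ => Hpsi t) cont.
move: E; rewrite dz mul0r /psi scale1r scale0r expr1n mul1r expr0n /= mul0r subr0.
by [].
Qed.

Lemma inv_derive (t : R) : t != 0 -> is_derive t (1:R) (fun y : R => y^-1) (- t ^- 2).
Proof.
move=> t0.
have di : derivable (@id R) t 1 by exact: derivable_id.
split; first exact: (derivableV (f := id) t0 di).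
by rewrite (deriveV (f := id) t0 di) derive_id [_ *: 1]mulr1.
Qed.

Lemma euler_k0 (g : V -> R) : smooth g -> Euler_eq g 0 -> forall x,
  g x = \sum_(a < p) xcoord a x * dpartial a g 0.
Proof.
move=> sm eu x.
have [HR key] := ray_key sm eu x.
set D := fun t => \sum_(a < p) xcoord a x * dpartial a g (t *: x) in HR key.
have key' : forall t, t * D t = g (t *: x).
  by move=> t; have := key t; rewrite mul0r addr0.
have phi0 : g (0 *: x) = 0 by rewrite -key' mul0r.
have -> : \sum_(a < p) xcoord a x * dpartial a g 0 = D 0 by rewrite /D scale0r.
have lin : forall s, 0 < s -> s < 1 -> g (s *: x) = s * g x.
  move=> s s0 s1.
  pose rho := fun t : R => t^-1 * g (t *: x).
  have Hrho : forall t, t != 0 -> is_derive t (1:R) rho 0.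
    move=> t t0.
    apply: is_derive_eq; first exact: (is_deriveM (inv_derive t0) (HR t)).
    rewrite /=.
    rewrite -/(D t) (_ : D t = t^-1 * g (t *: x)); last by rewrite -key' mulKf.
    have sc : forall a b : R, a *: b = a * b by [].
    rewrite !sc; field; exact: t0.
  have cont : {within `[s, 1], continuous rho}.
    apply: derivable_within_continuous => t.
    rewrite in_itv /= => /andP[h1 _].
    have t0 : t != 0 by rewrite gt_eqF // (lt_le_trans s0 h1).
    by case: (Hrho t t0).
  have Hr' : forall t, t \in `]s, 1[%R -> is_derive t (1:R) rho 0.
    move=> t; rewrite in_itv /= => /andP[h1 _]; apply: Hrho.
    by rewrite gt_eqF // (lt_trans s0 h1).
  have [c c01 E] := MVT s1 Hr' cont.
  move: E; rewrite mul0r /rho invr1 mul1r scale1r => /eqP; rewrite subr_eq0 => /eqP ->.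
  by rewrite mulVKf // gt_eqF.
case: (HR 0) => dphi vphi.
have HD0 : (fun h : R => h^-1 *: (((fun t => g (t *: x)) \o shift 0) (h *: 1) - g (0 *: x)))
    @ 0^' --> D 0.
  have vphi' : 'D_(1:R) (fun t : R => g (t *: x)) (0:R) = D 0 := vphi.
  by rewrite -vphi'; exact: dphi.
apply/eqP; rewrite eq_sym -subr_eq0 -normr_eq0; apply/negPn/negP => hne.
have e0 : 0 < `|D 0 - g x| by rewrite lt_neqAle normr_ge0 andbT eq_sym.
move/cvgrPdist_lt: HD0 => /(_ _ e0).
rewrite near_withinE => /nbhs_normP [d /= d0 Hd].
pose h := Num.min (d / 2) (1 / 2).
have h0 : 0 < h by rewrite lt_min !divr_gt0.
have h1 : h < 1.
  by rewrite /h gt_min; apply/orP; right; lra.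
have hd : `|0 - h| < d.
  rewrite sub0r normrN gtr0_norm // /h gt_min; apply/orP; left; lra.
have := Hd h hd (lt0r_neq0 h0).
rewrite /= [h *: 1]mulr1 addr0 phi0 subr0 lin // [_ *: _]mulKf ?lt0r_neq0 //.
by rewrite ltxx.
Qed.

End S.

Section Comb.
Variables (n N : nat) (deg : 'I_N -> z2deg n).

Lemma ksign_dec (m : expo N) al : ksign deg (expo_dec m al) al = ksign deg m al.
Proof.
rewrite /ksign; apply: eq_bigr => b hb.
have nb : b != al by rewrite -val_eqE /= neq_ltn hb.
by rewrite ffunE (negbTE nb).
Qed.

Lemma inc_dec (m : expo N) al : (0 < m al)%N -> expo_inc (expo_dec m al) al = m.
Proof.
move=> hm; apply/ffunP => b; rewrite !ffunE.
by case: eqP => [->|//]; rewrite prednK.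
Qed.

Lemma valid0 : valid_expo deg (expo0 N).
Proof. by apply/forallP => al; apply/implyP => _; rewrite ffunE. Qed.

Lemma valid_unit al : valid_expo deg (expo_unit al).
Proof. by apply/forallP => b; apply/implyP => _; rewrite ffunE; case: (b == al). Qed.

Lemma sum_expo0 : (\sum_(b < N) expo0 N b = 0)%N.
Proof. by apply: big1 => b _; rewrite ffunE. Qed.

Lemma sum_unit al : (\sum_(b < N) expo_unit al b = 1)%N.
Proof.
rewrite (bigD1 al) //= ffunE eqxx big1 // => b hb.
by rewrite ffunE (negbTE hb).
Qed.

Lemma sum0_expo0 (m : expo N) : (\sum_(b < N) m b = 0)%N -> m = expo0 N.
Proof.
move/eqP; rewrite sum_nat_eq0 => /forallP H.
by apply/ffunP => b; rewrite ffunE; apply/eqP; have := H b.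
Qed.

Lemma sum1_unit (m : expo N) : (\sum_(b < N) m b = 1)%N -> exists al, m = expo_unit al.
Proof.
move=> H.
case: (pickP (fun al => 0 < m al)%N) => [al hal | h0]; last first.
  move: H; rewrite big1 // => b _; apply/eqP; have := h0 b; rewrite lt0n => /negbFE.
  by [].
exists al.
move: H; rewrite (bigD1 al) //= => H.
have h1 : m al = 1%N by lia.
move: H; rewrite h1 => /eqP; rewrite -[X in _ == X](addn0 1%N) eqn_add2l. rewrite sum_nat_eq0 => /forallP h2.
apply/ffunP => b; rewrite ffunE.
case: (eqVneq b al) => [->|hb]; first by rewrite h1.
by apply/eqP; have := h2 b; rewrite hb.
Qed.

End Comb.

Lemma euler_m (R : realType) (n p N : nat) (deg : 'I_N -> z2deg n) (f : zfun R p N) m :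
  is_zfun deg f -> euler deg f = f -> valid_expo deg m ->
  Euler_eq (f m) (\sum_(al < N) m al)%N.
Proof.
move=> hf eu vm y.
have E := congr1 (fun F => F m y) eu; rewrite /euler /= in E.
rewrite -[RHS]E; congr (_ + _); rewrite natr_sum mulr_suml; apply: eq_bigr => al _.
rewrite /mul_xi /dxi vm andbT.
case: (posnP (m al)) => [m0 | mpos].
  by rewrite m0 /= mul0r.
rewrite ksign_dec inc_dec // ffunE eqxx prednK // !mulrA.
have ss : forall k : nat, (-1 : R) ^+ k * (-1) ^+ k = 1.
  by move=> k; rewrite -exprMn mulrNN mulr1 expr1n.
by rewrite ss mul1r.
Qed.


Unset Implicit Arguments.
Set Strict Implicit.

Theorem proposition4p4 (R : realType) (n p N : nat) (deg : 'I_N -> z2deg n)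
  (f : zfun R p N) :
  (1 <= n)%N ->
  (forall al : 'I_N, deg al != [ffun => false]) ->
  is_zfun deg f ->
  euler deg f = f ->
  exists (F : 'I_p -> R) (G : 'I_N -> R), f = linear_zfun F G.
Proof.
move=> _ _ hf eu.
exists (fun a => dpartial a (f (expo0 N)) 0), (fun al => f (expo_unit al) 0).
apply/funext => m; apply/funext => x.
rewrite /linear_zfun.
case: (boolP (valid_expo deg m)) => vm; last first.
  rewrite ((hf m).2 vm).
  have n0 : (m == expo0 N) = false.
    by apply/negbTE; apply: contraNneq vm => ->; exact: valid0.
  rewrite n0 add0r big1 // => al _.
  have -> : (m == expo_unit al) = false.
    by apply/negbTE; apply: contraNneq vm => ->; exact: valid_unit.
  by [].
have sm := (hf m).1 vm.
have E := euler_m hf eu vm.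
case Hk : (\sum_(al < N) m al)%N E => [|[|j]] E.
- rewrite (euler_k0 sm E x) (sum0_expo0 Hk) eqxx [X in _ + X]big1 ?addr0.
    by apply: eq_bigr => a _; rewrite mulrC.
  move=> al _.
  have -> : (expo0 N == expo_unit al) = false.
    by apply/negbTE/eqP => h; have := sum_unit al; rewrite -h sum_expo0.
  by [].
- have [al mE] := sum1_unit Hk.
  rewrite (euler_k1 sm E x) mE.
  have -> : (expo_unit al == expo0 N) = false.
    by apply/negbTE/eqP => h; have := sum_unit al; rewrite h sum_expo0.
  rewrite add0r (bigD1 al) //= eqxx big1 ?addr0 // => b hb.
  have -> : (expo_unit al == expo_unit b) = false.
    apply/negbTE/eqP => h; move/ffunP: h => /(_ al).
    by rewrite !ffunE eqxx eq_sym (negbTE hb).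
  by [].
- rewrite (euler_k2 sm E x).
  have -> : (m == expo0 N) = false.
    by apply/negbTE/eqP => h; move: Hk; rewrite h sum_expo0.
  rewrite add0r big1 // => al _.
  have -> : (m == expo_unit al) = false.
    by apply/negbTE/eqP => h; move: Hk; rewrite h sum_unit.
  by [].
Qed.
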